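(* Let $\{(X_\alpha,d_\alpha)\}_{\alpha\in\mathbb I}$ be a strict long directed family of metric spaces (with $X_\alpha\subseteq X_\beta$ for $\alpha\leq\beta$). If all bonding maps $(X_\alpha,d_\alpha)\to(X_\beta,d_\beta)$ are Lipschitz with a fixed constant $L>0$ (in particular, if they are isometries), then $$d(x,y):=\limsup_{\alpha\in\mathbb I}d_\alpha(x,y)=\inf_{\alpha\in\mathbb I}\sup\{d_\beta(x,y)\mid x,y\in X_\beta,\ \beta\geq\alpha\}$$ is a metric on $X=\bigcup_\alpha X_\alpha$, and it induces the colimit space topology $\mathscr T=\{U\subseteq X\mid U\cap X_\alpha\text{ open in }X_\alpha\ \forall\alpha\}$.
   Context: A directed family of spaces is strict if every bonding map (here the inclusion $X_\alpha\to X_\beta$, $\alpha\leq\beta$) is a topological embedding. It is long if the directed index set $\mathbb I$ is long: every countable subset of $\mathbb I$ has an upper bound in $\mathbb I$. *)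

(* Defs.v *)
From HB Require Import structures.
From mathcomp Require Import all_boot all_order all_algebra.
From mathcomp Require Import all_classical all_reals.
From mathcomp Require Import ereal.
Set Implicit Arguments. Unset Strict Implicit. Unset Printing Implicit Defensive.
Import Order.TTheory GRing.Theory Num.Theory.
Local Open Scope classical_set_scope.
Local Open Scope ring_scope.

Definition is_metric_on {R : realType} {T : Type} (A : set T) (d : T -> T -> R) : Prop :=
  forall x y z, A x -> A y -> A z ->
    [/\ 0 <= d x y, d x y = 0 <-> x = y, d x y = d y x & d x z <= d x y + d y z].

Definition metric_open {R : realType} {T : Type} (A : set T) (d : T -> T -> R) (U : set T) : Prop :=
  U `<=` A /\ forall x, U x -> exists2 r : R, 0 < r & forall y, A y -> d x y < r -> U y.

Definition incl_embedding {R : realType} {T : Type} (A : set T) (dA : T -> T -> R)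
    (B : set T) (dB : T -> T -> R) : Prop :=
  A `<=` B /\ forall U, U `<=` A ->
    (metric_open A dA U <-> exists V, metric_open B dB V /\ U = V `&` A).

Definition directed_preorder {I : Type} (le : I -> I -> Prop) : Prop :=
  [/\ (exists i : I, True), (forall i, le i i),
      (forall i j k, le i j -> le j k -> le i k) &
      (forall i j, exists k, le i k /\ le j k)].

Definition long_index {I : Type} (le : I -> I -> Prop) : Prop :=
  forall A : set I, countable A -> exists u, forall a, A a -> le a u.

Definition limsup_metric {R : realType} {T I : Type} (le : I -> I -> Prop)
    (X : I -> set T) (d : I -> T -> T -> R) (x y : T) : \bar R :=
  ereal_inf [set ereal_sup [set (d b x y)%:E | b in [set b | le a b /\ X b x /\ X b y]]
            | a in [set: I]].

(* Main.v *)
Require Import Defs.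
From HB Require Import structures.
From mathcomp Require Import all_boot all_order all_algebra.
From mathcomp Require Import all_classical all_reals.
From mathcomp Require Import ereal.
From mathcomp Require Import lra.
Import Order.TTheory GRing.Theory Num.Theory.
Local Open Scope classical_set_scope.
Local Open Scope ring_scope.

Lemma small_inv (R : realType) (r : R) : 0 < r -> exists n : nat, n.+1%:R^-1 < r.
Proof.
move=> r0; have ri : 0 <= r^-1 by rewrite invr_ge0 ltW.
have := archi_boundP ri.
set n := Num.bound _ => h; exists n.
rewrite invf_plt ?posrE ?ltr0Sn //.
by apply: lt_le_trans h _; rewrite ler_nat.
Qed.

Lemma range_countable (I : Type) (g : nat -> I) : countable (range g).
Proof.
apply: card_le_trans (card_image_le _ _) _; exact: countableP.
Qed.

Lemma le_of_small (R : realType) (x y : R) :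
  (forall n : nat, x <= y + n.+1%:R^-1) -> x <= y.
Proof.
move=> h; apply/ler_addgt0Pr => e e0; have [n hn] := @small_inv R e e0.
by apply: le_trans (h n) _; rewrite lerD2l ltW.
Qed.
Theorem theorem2p8 (R : realType) (T I : Type) (le : I -> I -> Prop)
    (X : I -> set T) (d : I -> T -> T -> R) (L : R) :
  directed_preorder le -> long_index le ->
  (forall a, is_metric_on (X a) (d a)) ->
  (forall a b, le a b -> incl_embedding (X a) (d a) (X b) (d b)) ->
  0 < L ->
  (forall a b x y, le a b -> X a x -> X a y -> d b x y <= L * d a x y) ->
  let Xall := \bigcup_a X a in
  let dlim := limsup_metric le X d in
  (forall x y, Xall x -> Xall y -> dlim x y \is a fin_num) /\
  is_metric_on Xall (fun x y => fine (dlim x y)) /\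
  (forall U, metric_open Xall (fun x y => fine (dlim x y)) U <->
     (U `<=` Xall /\ forall a, metric_open (X a) (d a) (U `&` X a))).
Proof.
move=> [_ lerefl letr ledir] long met emb L0 lip Xall dlim.
pose S a x y := ereal_sup [set (d b x y)%:E | b in [set b | le a b /\ X b x /\ X b y]].
have dlimE : forall x y, dlim x y = ereal_inf [set S a x y | a in [set: I]] by [].
have sub : forall a b, le a b -> X a `<=` X b := fun a b h => (emb a b h).1.
have Sge0 : forall a a0 x y, X a0 x -> X a0 y -> (0 <= S a x y)%E.
  move=> a a0 x y xa ya; have [c [ac a0c]] := ledir a a0.
  apply: le_ereal_sup_tmp; exists (d c x y)%:E.
    by exists c => //; split => //; split; apply: sub a0c _ _.
  by rewrite lee_fin; have [] := met c x y x (sub _ _ a0c _ xa) (sub _ _ a0c _ ya) (sub _ _ a0c _ xa).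
have SleL : forall a x y, X a x -> X a y -> (S a x y <= (L * d a x y)%:E)%E.
  move=> a x y xa ya; apply: ge_ereal_sup => _ [b [ab [xb yb]] <-].
  by rewrite lee_fin; exact: lip.
have Smono : forall a a' x y, le a a' -> (S a' x y <= S a x y)%E.
  move=> a a' x y aa'; apply: ereal_sup_le => _ [b [a'b [xb yb]] <-].
  by exists b => //; split => //; exact: letr a'b.
have dleS : forall a x y, (dlim x y <= S a x y)%E.
  by move=> a x y; apply: ereal_inf_lbound; exists a.
have dge0 : forall a0 x y, X a0 x -> X a0 y -> (0 <= dlim x y)%E.
  move=> a0 x y xa ya; apply: le_ereal_inf_tmp => _ [a _ <-]; exact: Sge0 xa ya.
have fin : forall a0 x y, X a0 x -> X a0 y -> dlim x y \is a fin_num.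
  move=> a0 x y xa ya; rewrite ge0_fin_numE; last exact: dge0 xa ya.
  by apply: le_lt_trans (dleS a0 x y) _; apply: le_lt_trans (SleL _ _ _ xa ya) _; exact: ltry.
have attain : forall a0 x y, X a0 x -> X a0 y ->
    exists u, le a0 u /\ forall a, le u a -> S a x y = dlim x y.
  move=> a0 x y xa ya; have fd := fin _ _ _ xa ya.
  have : forall n : nat, exists a, (S a x y < dlim x y + (n.+1%:R^-1)%:E)%E.
    move=> n; have e0 : (0:R) < n.+1%:R^-1 by rewrite invr_gt0 ltr0Sn.
    by have [_ [a _ <-] lt] := lb_ereal_inf_adherent e0 fd; exists a.
  move/choice => [f hf].
  pose g n := if n is m.+1 then f m else a0.
  have [u hu] := long (range g) (@range_countable I g).
  have a0u : le a0 u by apply: hu; exists 0%N.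
  have fu : forall n, le (f n) u by move=> n; apply: hu; exists n.+1.
  exists u; split => // a ua.
  apply/eqP; rewrite eq_le dleS andbT.
  apply: le_trans (Smono _ _ _ _ ua) _.
  have xu := sub _ _ a0u _ xa; have yu := sub _ _ a0u _ ya.
  have fSu : S u x y \is a fin_num.
    rewrite ge0_fin_numE; last exact: Sge0 xu yu.
    by apply: le_lt_trans (SleL _ _ _ xu yu) _; exact: ltry.
  rewrite -(fineK fSu) -(fineK fd) lee_fin; apply: le_of_small => n.
  rewrite -lee_fin EFinD !fineK //.
  exact: le_trans (Smono _ _ _ _ (fu n)) (ltW (hf n)).
pose D x y := fine (dlim x y).
have good : forall a0 x y, X a0 x -> X a0 y -> exists u, le a0 u /\
    forall a, le u a -> (forall b, le a b -> d b x y <= D x y) /\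
      (forall e, 0 < e -> exists2 b, le a b & D x y - e < d b x y).
  move=> a0 x y xa ya; have fd := fin _ _ _ xa ya.
  have [u [a0u hS]] := attain _ _ _ xa ya.
  exists u; split => // a ua; split.
    move=> b ab; rewrite -lee_fin /D fineK // -(hS a ua).
    apply: le_ereal_sup_tmp; exists (d b x y)%:E => //; exists b => //.
    by split => //; split; apply: sub (letr _ _ _ a0u (letr _ _ _ ua ab)) _ _.
  move=> e e0.
  have : ((D x y - e)%:E < S a x y)%E.
    by rewrite hS // -(fineK fd) lte_fin /D; lra.
  by move/ereal_sup_gt => [_ [b [ab _] <-]]; rewrite lte_fin => h; exists b.
have C3 : forall a x y, X a x -> X a y -> D x y <= L * d a x y.
  move=> a x y xa ya; rewrite -lee_fin /D fineK; last exact: fin xa ya.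
  exact: le_trans (dleS a x y) (SleL _ _ _ xa ya).
have C4 : forall a x y, X a x -> X a y -> 0 <= D x y.
  by move=> a x y xa ya; apply: fine_ge0; exact: dge0 xa ya.
have common : forall x y, Xall x -> Xall y -> exists a, X a x /\ X a y.
  move=> x y [a _ xa] [b _ yb]; have [c [ac bc]] := ledir a b.
  by exists c; split; [exact: sub ac _ xa | exact: sub bc _ yb].
have symle : forall a0 x y, X a0 x -> X a0 y -> D x y <= D y x.
  move=> a0 x y xa ya.
  have [u1 [a0u1 h1]] := good _ _ _ xa ya.
  have [u2 [a0u2 h2]] := good _ _ _ ya xa.
  have [w [u1w u2w]] := ledir u1 u2.
  apply/ler_addgt0Pr => e e0.
  have [b wb hb] := (h1 w u1w).2 e e0.
  have := (h2 w u2w).1 b wb.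
  have xb := sub _ _ (letr _ _ _ a0u1 (letr _ _ _ u1w wb)) _ xa.
  have yb := sub _ _ (letr _ _ _ a0u1 (letr _ _ _ u1w wb)) _ ya.
  have [_ _ sy _] := met b x y x xb yb xb.
  by rewrite sy in hb; move=> h; lra.
split.
  move=> x y Xx Xy; have [a [xa ya]] := common x y Xx Xy; exact: fin xa ya.
split.
  move=> x y z Xx Xy Xz.
  have [a1 [xa1 ya1]] := common x y Xx Xy.
  have [a0 [xa0 za0]] := common x z Xx Xz.
  have [c [a1c a0c]] := ledir a1 a0.
  have xa := sub _ _ a1c _ xa1; have ya := sub _ _ a1c _ ya1; have za := sub _ _ a0c _ za0.
  split.
  - exact: C4 xa ya.
  - split.
      move=> D0; have [u [au h]] := good _ _ _ xa ya.
      have := (h u (lerefl u)).1 u (lerefl u); rewrite /D D0 => h0.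
      have xu := sub _ _ au _ xa; have yu := sub _ _ au _ ya.
      have [h1 [h2 _] _ _] := met u x y x xu yu xu.
      by apply: h2; apply/eqP; rewrite eq_le h0 h1.
    move=> <-; apply/eqP; rewrite eq_le (C4 c x x xa xa) andbT.
    apply: le_trans (C3 _ _ _ xa xa) _.
    have [_ [_ hx] _ _] := met c x x x xa xa xa; by rewrite hx // mulr0.
  - by apply/eqP; rewrite eq_le (symle c) ?(symle c).
  - have [u1 [cu1 h1]] := good _ _ _ xa za.
    have [u2 [cu2 h2]] := good _ _ _ xa ya.
    have [u3 [cu3 h3]] := good _ _ _ ya za.
    have [w [u1w u2w]] := ledir u1 u2.
    have [w' [ww' u3w']] := ledir w u3.
    apply/ler_addgt0Pr => e e0.
    have [b w'b hb] := (h1 w' (letr _ _ _ u1w ww')).2 e e0.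
    have hxy := (h2 w' (letr _ _ _ u2w ww')).1 b w'b.
    have hyz := (h3 w' u3w').1 b w'b.
    have cb : le c b := letr _ _ _ cu1 (letr _ _ _ u1w (letr _ _ _ ww' w'b)).
    have [_ _ _ tri] := met b x y z (sub _ _ cb _ xa) (sub _ _ cb _ ya) (sub _ _ cb _ za).
    rewrite /D in hb hxy hyz; lra.
move=> U; split.
  move=> [Usub Uop]; split => // a; split; first by move=> ? [].
  move=> x [Ux xa]; have [r r0 hr] := Uop x Ux.
  exists (r / L); first exact: divr_gt0.
  move=> y ya dxy; split => //; apply: hr; first by exists a.
  rewrite ltr_pdivlMr // mulrC in dxy.
  exact: le_lt_trans (C3 a x y xa ya) dxy.
move=> [Usub Uop]; split => // x Ux.
apply: contrapT => nr.
have : forall n : nat, exists y, [/\ Xall y, D x y < n.+1%:R^-1 & ~ U y].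
  move=> n; apply: contrapT => hn; apply: nr; exists n.+1%:R^-1.
    by rewrite invr_gt0 ltr0Sn.
  move=> y Xy dy; apply: contrapT => nUy; apply: hn; by exists y.
move/choice => [yf hyf].
have [ax _ xax] := Usub x Ux.
have : forall n : nat, exists u, [/\ le ax u, X u (yf n) &
    forall b, le u b -> d b x (yf n) <= D x (yf n)].
  move=> n; have [Xy _ _] := hyf n; have [c _ yc] := Xy.
  have [c' [axc' cc']] := ledir ax c.
  have [u [c'u hu]] := good _ _ _ (sub _ _ axc' _ xax) (sub _ _ cc' _ yc).
  exists u; split; first exact: letr axc' c'u.
    exact: sub (letr _ _ _ cc' c'u) _ yc.
  by move=> b ub; exact: (hu u (lerefl u)).1 b ub.
move/choice => [uf huf].
pose g n := if n is m.+1 then uf m else ax.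
have [w hw] := long (range g) (@range_countable I g).
have axw : le ax w by apply: hw; exists 0%N.
have fw : forall n, le (uf n) w by move=> n; apply: hw; exists n.+1.
have xw := sub _ _ axw _ xax.
have [_ op] := Uop w.
have [r r0 hr] := op x (conj Ux xw).
have [n hn] := @small_inv R r r0.
have [_ yu hb] := huf n; have [_ dn nU] := hyf n.
have hd : d w x (yf n) < r.
  by apply: le_lt_trans (hb w (fw n)) _; apply: lt_trans dn hn.
have [Uy _] := hr (yf n) (sub _ _ (fw n) _ yu) hd.
exact: nU Uy.
Qed.
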